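(* For every integer $p\ge 3$, the cycle $C_p$ on $p$ vertices satisfies $$\gamma_{[3R]}(C_p)=\begin{cases}\left\lceil \frac{4p}{3}\right\rceil & \text{if } p\in\{4,5,7,10\} \text{ or } p\equiv 0\pmod 3,\\[0.5em] \left\lceil \frac{4p}{3}\right\rceil+1 & \text{if } p\notin\{4,5,7,10\} \text{ and } p\equiv 1,2\pmod 3.\end{cases}$$
   Context: For a graph $\Gamma=(V,E)$ and $h:V\to\{0,1,2,3,4\}$, let $AN(v)=\{w\in N(v):h(w)\ge 1\}$, $AN[v]=AN(v)\cup\{v\}$ and $h(S)=\sum_{u\in S}h(u)$. $h$ is a triple Roman dominating function (3RDF) if every $v$ with $h(v)<3$ satisfies $h(AN[v])\ge|AN(v)|+3$. The triple Roman domination number $\gamma_{[3R]}(\Gamma)$ is the minimum weight $h(V)$ of a 3RDF of $\Gamma$. *)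

(* Defs.v *)
From mathcomp Require Import all_boot.
Set Implicit Arguments. Unset Strict Implicit. Unset Printing Implicit Defensive.

(* A graph is a (symmetric, irreflexive) relation e on a finite vertex type T.
   Labels h : T -> {0,..,4} are finite functions into 'I_5. *)
Section TRD.
Variables (T : finType) (e : rel T).

Definition active_nbrs (h : {ffun T -> 'I_5}) (v : T) : {set T} :=
  [set w | e v w & 0 < h w].

Definition hAN (h : {ffun T -> 'I_5}) (v : T) : nat :=
  h v + \sum_(w in active_nbrs h v) (h w : nat).

Definition is3RDF (h : {ffun T -> 'I_5}) : bool :=
  [forall v, (h v < 3) ==> (#|active_nbrs h v| + 3 <= hAN h v)].

Definition weight (h : {ffun T -> 'I_5}) : nat := \sum_(v : T) (h v : nat).

(* minimum weight of a 3RDF; the constant 4 * #|T| is the weight of the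
   constant-4 function, which is always a 3RDF, so this is the true minimum *)
Definition gamma3R : nat :=
  \big[minn/4 * #|T|]_(h : {ffun T -> 'I_5} | is3RDF h) weight h.
End TRD.

Definition cycle_rel (p : nat) : rel 'I_p :=
  fun i j => (j == (i.+1 %% p) :> nat) || (i == (j.+1 %% p) :> nat).

Definition ceil4p3 (p : nat) : nat := (4 * p + 2) %/ 3.
Arguments cycle_rel p : clear implicits.

(* Main.v *)
Require Import Defs.
From mathcomp Require Import all_boot zify.
Set Implicit Arguments. Unset Strict Implicit. Unset Printing Implicit Defensive.

Definition okb (a b c : nat) : bool :=
  (3 <= b) || ((0 < a) + (0 < c) + 3 <= b + ((if 0 < a then a else 0) + (if 0 < c then c else 0))).

Definition K := 20.
Definition OFF := 10.
Definition r5 := iota 0 5.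
Definition minopt (x y : option nat) := match x, y with
  | None, _ => y | _, None => x | Some a, Some b => Some (minn a b) end.
Definition tbl := seq (seq (seq (seq (option nat)))).
Definition get (T : tbl) a b c d : option nat :=
  nth None (nth [::] (nth [::] (nth [::] T a) b) c) d.
Definition mk (f : nat -> nat -> nat -> nat -> option nat) : tbl :=
  [seq [seq [seq [seq f a b c d | d <- r5] | c <- r5] | b <- r5] | a <- r5].
Definition T0 : tbl := mk (fun a b c d => if (a == c) && (b == d) then Some OFF else None).
Definition stepT (T : tbl) : tbl := mk (fun a b c d =>
  foldr minopt None [seq (if okb a b x then omap (fun w => w + 3 * x - 4) (get T b x c d) else None) | x <- r5]).
Fixpoint tab n := if n is n'.+1 then stepT (tab n') else T0.
Definition red n := if n < K then n else K + (n - K) %% 3.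

Definition formula p := if (p \in [:: 4; 5; 7; 10]) || (p %% 3 == 0) then ceil4p3 p else (ceil4p3 p).+1.

Definition stepok (m : nat) : bool :=
  let T := tab m in let T' := tab (red m.+1) in
  all (fun a => all (fun b => all (fun x => all (fun c => all (fun d =>
    okb a b x ==> match get T b x c d with None => true
      | Some w => match get T' a b c d with Some w' => w' + 4 <= w + 3 * x | None => false end end)
    r5) r5) r5) r5) r5.

Definition finok (p : nat) : bool :=
  let T := tab (red p) in
  all (fun a => all (fun b => match get T a b a b with
     Some w => 3 * formula p + OFF <= w + 4 * p | None => true end) r5) r5.

Lemma stepok_all : all stepok (iota 0 (K + 3)).
Proof. vm_compute. reflexivity. Qed.
Lemma finok_all : all finok (iota 3 K).
Proof. vm_compute. reflexivity. Qed.
Lemma base_ok : all (fun a => all (fun b => get (tab 0) a b a b == Some OFF) r5) r5.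
Proof. vm_compute. reflexivity. Qed.

Lemma r5P a : a < 5 -> a \in r5.
Proof. by rewrite mem_iota. Qed.

Lemma red_step n : red (red n).+1 = red n.+1.
Proof.
rewrite /red; case: (ltnP n K) => Hn.
  by [].
have H1 : ~~ ((K + (n - K) %% 3).+1 < K) by rewrite -leqNgt; apply: leq_trans (leqnSn _); apply: leq_addr.
have H2 : ~~ (n.+1 < K) by rewrite -leqNgt; apply: leq_trans Hn _.
rewrite (negbTE H1) (negbTE H2); congr (_ + _).
rewrite -addn1 -addnA addKn modnDml subSn //; by rewrite addn1.
Qed.

Lemma red_lt n : red n < K + 3.
Proof.
rewrite /red; case: (ltnP n K) => H; first by rewrite /K in H *; lia.
have := ltn_pmod (n - K) (isT : 0 < 3); rewrite /K. lia.
Qed.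

Lemma stepok_red n : stepok (red n).
Proof. by move/allP: stepok_all; apply; rewrite mem_iota /= red_lt. Qed.

Lemma path_lb n : forall F : nat -> nat, (forall j, F j < 5) ->
  (forall j, j < n -> okb (F j) (F j.+1) (F j.+2)) ->
  exists w, get (tab (red n)) (F 0) (F 1) (F n) (F n.+1) = Some w /\
            w + 4 * n <= 3 * (\sum_(j < n) F j.+2) + OFF.
Proof.
elim: n => [|n IH] F F5 Fok.
  exists OFF; split; last by rewrite big_ord0.
  have := base_ok; move/allP/(_ (F 0) (r5P (F5 0)))/allP/(_ (F 1) (r5P (F5 1))).
  by move/eqP.
have [w [Hg Hb]] := IH (fun j => F j.+1) (fun j => F5 j.+1)
   (fun j (Hj : j < n) => Fok j.+1 Hj).
have := stepok_red n; rewrite /stepok red_step.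
move/allP/(_ (F 0) (r5P (F5 0)))/allP/(_ (F 1) (r5P (F5 1)))/allP/(_ (F 2) (r5P (F5 2))).
move/allP/(_ (F n.+1) (r5P (F5 _)))/allP/(_ (F n.+2) (r5P (F5 _))).
rewrite (Fok 0 (ltn0Sn n)) /= Hg.
case: (get _ _ _ _ _) => // w' Hw'.
exists w'; split => //.
rewrite big_ord_recl /=.
rewrite /= in Hb.
have -> : \sum_(i < n) F (bump 0 i).+2 = \sum_(i < n) F i.+3 by apply: eq_bigr => i _; rewrite /bump /=.
move: Hb Hw'; move: (\sum_(i < n) F i.+3) => S; rewrite /OFF; lia.
Qed.

Definition hv p (p0 : 0 < p) (h : {ffun 'I_p -> 'I_5}) (x : nat) : nat :=
  h (Ordinal (ltn_pmod x p0)).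

Lemma hv_mod p (p0 : 0 < p) h x y : x %% p = y %% p -> hv p0 h x = hv p0 h y.
Proof. by move=> E; rewrite /hv; congr (nat_of_ord (h _)); apply: val_inj. Qed.

Lemma hv_ord p (p0 : 0 < p) h (v : 'I_p) : hv p0 h v = h v.
Proof. by rewrite /hv; congr (nat_of_ord (h _)); apply: val_inj; rewrite /= modn_small. Qed.

Lemma modS_eq p w : w < p -> w.+1 %% p = if w.+1 == p then 0 else w.+1.
Proof.
move=> Hw; case: eqP => [->|H]; first by rewrite modnn.
by rewrite modn_small //; lia.
Qed.

Lemma modP_eq p v : v < p -> (v + p.-1) %% p = if v == 0 then p.-1 else v.-1.
Proof.
move=> Hv; case: eqP => [->|H]; first by rewrite add0n modn_small //; lia.
rewrite (_ : v + p.-1 = v.-1 + p); last lia.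
by rewrite modnDr modn_small //; lia.
Qed.

Lemma cyc_nat p a b : 3 <= p -> a < p -> b < p ->
  (a == b.+1 %% p) = (b == (a + p.-1) %% p).
Proof.
move=> p3 Ha Hb; rewrite modS_eq // modP_eq //.
apply/eqP/eqP; case: (b.+1 =P p) => ?; case: (a =P 0) => ? /=; lia.
Qed.

Lemma cyc_iff p (v w : 'I_p) : 3 <= p ->
  cycle_rel p v w = (val w == v.+1 %% p) || (val w == (v + p.-1) %% p).
Proof.
move=> p3; rewrite /cycle_rel; congr (_ || _).
by apply: cyc_nat.
Qed.

Lemma nx_pv p v : 3 <= p -> v < p -> (v.+1 %% p) != (v + p.-1) %% p.
Proof.
move=> p3 Hv; rewrite modS_eq // modP_eq //.
apply/eqP; case: (v.+1 =P p) => ?; case: (v =P 0) => ? /=; lia.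
Qed.


Lemma vertex_ok p (p0 : 0 < p) (h : {ffun 'I_p -> 'I_5}) (v : 'I_p) : 3 <= p ->
  ((h v < 3) ==> (#|active_nbrs (cycle_rel p) h v| + 3 <= hAN (cycle_rel p) h v))
  = okb (hv p0 h (v + p.-1)) (h v) (hv p0 h v.+1).
Proof.
move=> p3.
set nx : 'I_p := Ordinal (ltn_pmod v.+1 p0).
set pv : 'I_p := Ordinal (ltn_pmod (v + p.-1) p0).
have Hne : pv != nx.
  by apply/eqP => /(congr1 val) /= E; move: (nx_pv p3 (ltn_ord v)); rewrite E eqxx.
have HS : forall g : 'I_p -> nat, \sum_(w in active_nbrs (cycle_rel p) h v) g w
        = (0 < h nx) * g nx + (0 < h pv) * g pv.
  move=> g; rewrite big_mkcond (bigD1 nx) //= (bigD1 pv) //= big1.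
    rewrite !in_set !cyc_iff //= !eqxx ?orbT /=.
    by case: (0 < h nx); case: (0 < h pv); rewrite /= ?mul1n ?mul0n ?addn0.
  move=> w /andP [Hw1 Hw2]; rewrite in_set cyc_iff //.
  have E1 : (val w == v.+1 %% p) = false by apply/negbTE; exact: Hw1.
  have E2 : (val w == (v + p.-1) %% p) = false by apply/negbTE; exact: Hw2.
  by rewrite E1 E2 /=.
rewrite /hAN -sum1_card !HS /okb /hv -/nx -/pv implybE -leqNgt.
congr (_ || _).
by case: (0 < h nx); case: (0 < h pv); rewrite /= ?muln1 ?mul1n ?mul0n ?addn0 ?add0n // addnC [_ + (h pv : nat)]addnC.
Qed.

Lemma is3RDF_iff p (p0 : 0 < p) (h : {ffun 'I_p -> 'I_5}) : 3 <= p ->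
  is3RDF (cycle_rel p) h = [forall v : 'I_p, okb (hv p0 h (v + p.-1)) (h v) (hv p0 h v.+1)].
Proof. by move=> p3; apply: eq_forallb => v; apply: vertex_ok. Qed.

Lemma gamma_le (T : finType) (e : rel T) h : is3RDF e h -> gamma3R e <= weight h.
Proof.
move=> H; rewrite /gamma3R.
have : h \in index_enum {ffun T -> 'I_5} by rewrite mem_index_enum.
elim: (index_enum _) => [|x r IHr] //.
rewrite inE big_cons; case/orP => [/eqP <-|Hr]; first by rewrite H geq_minl.
case: ifP => _; last exact: IHr.
by rewrite geq_min IHr // orbT.
Qed.

Lemma gamma_ge (T : finType) (e : rel T) B : B <= 4 * #|T| ->
  (forall h, is3RDF e h -> B <= weight h) -> B <= gamma3R e.
Proof.
move=> H1 H2; rewrite /gamma3R; apply: (big_ind (fun x => B <= x)) => //.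
by move=> x y Hx Hy; rewrite leq_min Hx Hy.
Qed.

Lemma shift_sum p (F : nat -> nat) : (forall j, F (j + p) = F j) ->
  \sum_(j < p) F j.+1 = \sum_(j < p) F j.
Proof.
move=> HF.
have E1 : \sum_(i < p.+1) F i = \sum_(i < p) F i + F p by rewrite big_ord_recr.
have E2 : \sum_(i < p.+1) F i = F 0 + \sum_(i < p) F i.+1 by rewrite big_ord_recl.
have E4 : F p = F 0 by rewrite -{1}(add0n p) HF.
lia.
Qed.

Lemma red_sub3 p : K + 3 <= p -> red p = red (p - 3).
Proof.
move=> H; rewrite /red.
have -> : (p < K) = false by apply/negbTE; rewrite -leqNgt; rewrite /K in H *; lia.
have -> : (p - 3 < K) = false by apply/negbTE; rewrite -leqNgt; rewrite /K in H *; lia.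
congr (_ + _); rewrite (_ : p - K = (p - 3 - K) + 3); last by rewrite /K in H *; lia.
by rewrite modnDr.
Qed.

Lemma formula_sub3 p : 14 <= p -> formula p = formula (p - 3) + 4.
Proof.
move=> H; rewrite /formula.
have E1 : (p \in [:: 4; 5; 7; 10]) = false by rewrite !inE; apply/negbTE; repeat (apply/norP; split); apply/eqP; lia.
have E2 : (p - 3 \in [:: 4; 5; 7; 10]) = false by rewrite !inE; apply/negbTE; repeat (apply/norP; split); apply/eqP; lia.
have E3 : (p - 3) %% 3 = p %% 3.
  by rewrite -(modnDr (p - 3) 3) subnK //; lia.
rewrite E1 E2 E3 /= /ceil4p3.
case: (p %% 3 == 0); lia.
Qed.

Lemma fin_bound p a b w : 3 <= p -> a < 5 -> b < 5 ->
  get (tab (red p)) a b a b = Some w -> 3 * formula p + OFF <= w + 4 * p.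
Proof.
elim/ltn_ind: p w => p IH w p3 Ha Hb Hg.
case: (ltnP p (K + 3)) => Hp.
  have: finok p by move/allP: finok_all; apply; rewrite mem_iota; rewrite /K in Hp *; lia.
  rewrite /finok; move/allP/(_ a (r5P Ha))/allP/(_ b (r5P Hb)).
  by rewrite Hg.
rewrite red_sub3 // in Hg.
rewrite /K in Hp.
have H1 : p - 3 < p by lia.
have H2 : 3 <= p - 3 by lia.
rewrite (@formula_sub3 p); last lia.
have := IH (p - 3) H1 w H2 Ha Hb Hg.
lia.
Qed.

Lemma lower p : 3 <= p -> formula p <= gamma3R (cycle_rel p).
Proof.
move=> p3; have p0 : 0 < p by lia.
apply: gamma_ge.
  rewrite card_ord /formula; case: ifP => _; rewrite /ceil4p3; lia.
move=> h H.
set F := hv p0 h.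
have F5 : forall j, F j < 5 by move=> j; exact: ltn_ord.
have Fp : forall j, F (j + p) = F j by move=> j; apply: hv_mod; rewrite modnDr.
have Fok : forall j, j < p -> okb (F j) (F j.+1) (F j.+2).
  move=> j _; rewrite (is3RDF_iff p0 h p3) in H.
  have := forallP H (Ordinal (ltn_pmod j.+1 p0)).
  have -> : hv p0 h (Ordinal (ltn_pmod j.+1 p0) + p.-1) = F j.
    apply: hv_mod => /=; rewrite modnDml.
    by rewrite (_ : j.+1 + p.-1 = j + p) ?modnDr //; lia.
  have -> : hv p0 h (Ordinal (ltn_pmod j.+1 p0)).+1 = F j.+2.
    by apply: hv_mod => /=; rewrite -addn1 modnDml addn1.
  done.
have [w [Hg Hb]] := path_lb F5 Fok.
have E0 : F p = F 0 by rewrite -{1}(add0n p) Fp.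
have E1 : F p.+1 = F 1 by rewrite -(add1n p) Fp.
rewrite E0 E1 in Hg.
have := fin_bound p3 (F5 0) (F5 1) Hg.
have S : \sum_(j < p) F j.+2 = weight h.
  rewrite (@shift_sum p (fun j => F j.+1)); last by move=> j; rewrite -addSn Fp.
  rewrite shift_sum //.
  by rewrite /weight; apply: eq_bigr => i _; exact: hv_ord.
rewrite S in Hb.
lia.
Qed.

Lemma upper p (G : nat -> nat) : 3 <= p -> (forall i, i < p -> G i < 5) ->
  G p = G 0 -> G p.+1 = G 1 -> (forall j, j < p -> okb (G j) (G j.+1) (G j.+2)) ->
  gamma3R (cycle_rel p) <= \sum_(i < p) G i.
Proof.
move=> p3 G5 Gp0 Gp1 Gok; have p0 : 0 < p by lia.
pose Gm x := G (x %% p).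
have Gm5 : forall x, Gm x < 5 by move=> x; apply: G5; apply: ltn_pmod.
have GmE : forall x, x < p.+2 -> Gm x = G x.
  move=> x Hx; rewrite /Gm; case: (ltnP x p) => H; first by rewrite modn_small.
  case: (x =P p) => [->|Hn]; first by rewrite modnn Gp0.
  have -> : x = p.+1 by lia.
  have -> : p.+1 %% p = 1 by rewrite -addn1 modnDl modn_small //; lia.
  by rewrite Gp1.
have GmM : forall x, Gm (x %% p) = Gm x by move=> x; rewrite /Gm modn_mod.
have Gmok : forall j, okb (Gm j) (Gm j.+1) (Gm j.+2).
  move=> j; set m := j %% p.
  have E0 : Gm j = Gm m by rewrite /m GmM.
  have E1 : Gm j.+1 = Gm m.+1 by rewrite /Gm /m -addn1 -(addn1 (j %% p)) modnDml.
  have E2 : Gm j.+2 = Gm m.+2 by rewrite /Gm /m -addn2 -(addn2 (j %% p)) modnDml.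
  have Hm : m < p by apply: ltn_pmod.
  rewrite E0 E1 E2 !GmE; [exact: Gok | lia | lia | lia].
set h : {ffun 'I_p -> 'I_5} := [ffun i : 'I_p => inord (Gm i)].
have hvE : forall x, hv p0 h x = Gm x.
  by move=> x; rewrite /hv ffunE /= inordK ?GmM.
have H3 : is3RDF (cycle_rel p) h.
  rewrite (is3RDF_iff p0 h p3); apply/forallP => v.
  rewrite !hvE -(hv_ord p0 h v) hvE.
  have := Gmok (v + p.-1).
  have -> : Gm (v + p.-1).+1 = Gm v by rewrite /Gm (_ : (v + p.-1).+1 = v + p) ?modnDr //; lia.
  have -> : Gm (v + p.-1).+2 = Gm v.+1 by rewrite /Gm (_ : (v + p.-1).+2 = v.+1 + p) ?modnDr //; lia.
  done.
apply: leq_trans (gamma_le H3) _.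
rewrite /weight leq_eqVlt; apply/orP; left; apply/eqP.
apply: eq_bigr => i _; rewrite ffunE inordK // GmE //.
have := ltn_ord i; lia.
Qed.

Definition pat j := if j %% 3 == 1 then 4 else 0.

Lemma pat_win j : okb (pat j) (pat j.+1) (pat j.+2).
Proof.
rewrite /pat.
have : j %% 3 = 0 \/ j %% 3 = 1 \/ j %% 3 = 2 by lia.
case=> [H|[H|H]].
- have -> : (j %% 3 == 1) = false by apply/eqP; lia.
  have -> : (j.+1 %% 3 == 1) = true by apply/eqP; lia.
  have -> : (j.+2 %% 3 == 1) = false by apply/eqP; lia.
  by [].
- have -> : (j %% 3 == 1) = true by apply/eqP; lia.
  have -> : (j.+1 %% 3 == 1) = false by apply/eqP; lia.
  have -> : (j.+2 %% 3 == 1) = false by apply/eqP; lia.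
  by [].
- have -> : (j %% 3 == 1) = false by apply/eqP; lia.
  have -> : (j.+1 %% 3 == 1) = false by apply/eqP; lia.
  have -> : (j.+2 %% 3 == 1) = true by apply/eqP; lia.
  by [].
Qed.

Lemma pat5 j : pat j < 5.
Proof. by rewrite /pat; case: ifP. Qed.

Ltac gv := rewrite /pat; repeat (case: ifP => /=); move=> *; lia.

Lemma sum_pat k : \sum_(i < 3 * k) pat i = 4 * k.
Proof.
elim: k => [|k IH]; first by rewrite big_ord0.
rewrite (_ : 3 * k.+1 = (3 * k).+2.+1); last lia.
rewrite !big_ord_recr /= IH.
have -> : pat (3 * k) = 0 by gv.
have -> : pat (3 * k).+1 = 4 by gv.
have -> : pat (3 * k).+2 = 0 by gv.
lia.
Qed.

Lemma fam0 k : 1 <= k -> gamma3R (cycle_rel (3 * k)) <= 4 * k.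
Proof.
move=> Hk; rewrite -sum_pat; apply: upper => //.
- lia.
- by move=> i _; apply: pat5.
- by gv.
- by gv.
- by move=> j _; apply: pat_win.
Qed.

Definition G1 k j := if j < 3 * k then pat j else if j == 3 * k then 3 else pat (j - 3 * k - 1).

Lemma fam1 k : 1 <= k -> gamma3R (cycle_rel (3 * k).+1) <= 4 * k + 3.
Proof.
move=> Hk.
have -> : 4 * k + 3 = \sum_(i < (3 * k).+1) G1 k i.
  rewrite big_ord_recr /= -sum_pat.
  have -> : G1 k (3 * k) = 3 by rewrite /G1; gv.
  congr (_ + _); apply: eq_bigr => i _; rewrite /G1 ltn_ord //.
apply: upper.
- lia.
- by move=> i _; rewrite /G1; case: ifP => _; [apply: pat5 | case: ifP => _ //; apply: pat5].
- rewrite /G1; gv.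
- rewrite /G1; gv.
move=> j Hj.
case: (ltnP j.+2 (3 * k)) => Hj2.
  have -> : G1 k j = pat j by rewrite /G1; gv.
  have -> : G1 k j.+1 = pat j.+1 by rewrite /G1; gv.
  have -> : G1 k j.+2 = pat j.+2 by rewrite /G1; gv.
  exact: pat_win.
have : j = 3 * k - 2 \/ j = 3 * k - 1 \/ j = 3 * k by lia.
case=> [E|[E|E]].
- have -> : G1 k j = 4 by rewrite /G1; gv.
  have -> : G1 k j.+1 = 0 by rewrite /G1; gv.
  have -> : G1 k j.+2 = 3 by rewrite /G1; gv.
  by [].
- have -> : G1 k j = 0 by rewrite /G1; gv.
  have -> : G1 k j.+1 = 3 by rewrite /G1; gv.
  have -> : G1 k j.+2 = 0 by rewrite /G1; gv.
  by [].
- have -> : G1 k j = 3 by rewrite /G1; gv.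
  have -> : G1 k j.+1 = 0 by rewrite /G1; gv.
  have -> : G1 k j.+2 = 4 by rewrite /G1; gv.
  by [].
Qed.

Definition G2 k j := if j < 3 * k then pat j else if j < 3 * k + 2 then 2 else pat (j - 3 * k - 2).

Lemma fam2 k : 1 <= k -> gamma3R (cycle_rel (3 * k).+2) <= 4 * k + 4.
Proof.
move=> Hk.
have -> : 4 * k + 4 = \sum_(i < (3 * k).+2) G2 k i.
  rewrite !big_ord_recr /= -sum_pat.
  have -> : G2 k (3 * k) = 2 by rewrite /G2; gv.
  have -> : G2 k (3 * k).+1 = 2 by rewrite /G2; gv.
  rewrite -addnA; congr (_ + _); apply: eq_bigr => i _; rewrite /G2 ltn_ord //.
apply: upper.
- lia.
- by move=> i _; rewrite /G2; case: ifP => _; [apply: pat5 | case: ifP => _ //; apply: pat5].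
- rewrite /G2; gv.
- rewrite /G2; gv.
move=> j Hj.
case: (ltnP j.+2 (3 * k)) => Hj2.
  have -> : G2 k j = pat j by rewrite /G2; gv.
  have -> : G2 k j.+1 = pat j.+1 by rewrite /G2; gv.
  have -> : G2 k j.+2 = pat j.+2 by rewrite /G2; gv.
  exact: pat_win.
have : j = 3 * k - 2 \/ j = 3 * k - 1 \/ j = 3 * k \/ j = 3 * k + 1 by lia.
case=> [E|[E|[E|E]]].
- have -> : G2 k j = 4 by rewrite /G2; gv.
  have -> : G2 k j.+1 = 0 by rewrite /G2; gv.
  have -> : G2 k j.+2 = 2 by rewrite /G2; gv.
  by [].
- have -> : G2 k j = 0 by rewrite /G2; gv.
  have -> : G2 k j.+1 = 2 by rewrite /G2; gv.
  have -> : G2 k j.+2 = 2 by rewrite /G2; gv.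
  by [].
- have -> : G2 k j = 2 by rewrite /G2; gv.
  have -> : G2 k j.+1 = 2 by rewrite /G2; gv.
  have -> : G2 k j.+2 = 0 by rewrite /G2; gv.
  by [].
- have -> : G2 k j = 2 by rewrite /G2; gv.
  have -> : G2 k j.+1 = 0 by rewrite /G2; gv.
  have -> : G2 k j.+2 = 4 by rewrite /G2; gv.
  by [].
Qed.

Lemma check_lt n (P : nat -> bool) : all P (iota 0 n) -> forall j, j < n -> P j.
Proof. by move/allP=> H j Hj; apply: H; rewrite mem_iota. Qed.

Lemma exc p (l : seq nat) : 3 <= p -> all (fun j => nth 0 l j < 5) (iota 0 p) ->
  nth 0 l p = nth 0 l 0 -> nth 0 l p.+1 = nth 0 l 1 ->
  all (fun j => okb (nth 0 l j) (nth 0 l j.+1) (nth 0 l j.+2)) (iota 0 p) ->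
  gamma3R (cycle_rel p) <= \sum_(i < p) nth 0 l i.
Proof.
move=> p3 H5 H0 H1 Hw; apply: upper => //.
- by apply: check_lt H5.
- by apply: check_lt Hw.
Qed.

Theorem proposition22 (p : nat) : 3 <= p ->
  gamma3R (cycle_rel p) =
    if (p \in [:: 4; 5; 7; 10]) || (p %% 3 == 0) then ceil4p3 p
    else (ceil4p3 p).+1.
Proof.
move=> p3; change (gamma3R (cycle_rel p) = formula p).
apply/eqP; rewrite eqn_leq lower // andbT.
case: (boolP (p \in [:: 4; 5; 7; 10])) => Hex.
  move: Hex; rewrite !inE => /or4P [] /eqP ->.
  - apply: leq_trans (@exc 4 [:: 0;3;0;3;0;3] isT isT erefl erefl isT) _.
    by rewrite !big_ord_recr big_ord0.
  - apply: leq_trans (@exc 5 [:: 0;2;2;0;3;0;2] isT isT erefl erefl isT) _.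
    by rewrite !big_ord_recr big_ord0.
  - apply: leq_trans (@exc 7 [:: 0;2;2;0;3;0;3;0;2] isT isT erefl erefl isT) _.
    by rewrite !big_ord_recr big_ord0.
  - apply: leq_trans (@exc 10 [:: 0;2;2;0;3;0;2;2;0;3;0;2] isT isT erefl erefl isT) _.
    by rewrite !big_ord_recr big_ord0.
have E := divn_eq p 3.
have : p %% 3 = 0 \/ p %% 3 = 1 \/ p %% 3 = 2 by lia.
rewrite /formula (negbTE Hex) /=.
case=> [H|[H|H]].
- rewrite H /= E H addn0 mulnC; apply: leq_trans (fam0 _) _; rewrite /ceil4p3; lia.
- have -> : (p %% 3 == 0) = false by rewrite H.
  rewrite E H addn1 mulnC; apply: leq_trans (fam1 _) _; rewrite /ceil4p3; lia.
- have -> : (p %% 3 == 0) = false by rewrite H.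
  rewrite E H addn2 mulnC; apply: leq_trans (fam2 _) _; rewrite /ceil4p3; lia.
Qed.
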